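(* Let $A=(a(x),dF(x))$ and $B=(b(x),dF(x))$ be games. Then $f(p)=\exp\big(\int\log(pa(x)+(1-p)b(x))\,dF(x)\big)/e^r$ is concave on $[0,1]$.
   Context: A game is a pair $(a(x),dF(x))$ with $dF$ a probability measure on $\mathbb{R}$ and $a\ge0$ measurable with finite positive integral. A real $r$ is fixed; convention $\exp(-\infty)=0$. *)

(* Defs.v *)
From HB Require Import structures.
From mathcomp Require Import all_boot all_order all_algebra.
From mathcomp Require Import all_classical all_reals all_analysis.
Set Implicit Arguments. Unset Strict Implicit. Unset Printing Implicit Defensive.
Import Order.TTheory GRing.Theory Num.Theory.
Local Open Scope classical_set_scope.
Local Open Scope ring_scope.

Definition is_game (R : realType) (P : probability R R) (a : R -> R) : Prop :=
  [/\ measurable_fun setT a,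
      (forall x, 0 <= a x),
      P.-integrable setT (fun x => (a x)%:E) &
      (0 < \int[P]_x (a x)%:E)%E].

(* f(p) = exp( \int log(p a(x) + (1-p) b(x)) dF(x) ) / e^r,
   with log 0 = -oo (lne) and exp(-oo) = 0 (expeR). *)
Definition gamef (R : realType) (P : probability R R) (a b : R -> R) (r : R)
    (p : R) : \bar R :=
  (expeR (\int[P]_x lne ((p * a x + (1 - p) * b x)%:E)) * ((expR r)^-1)%:E)%E.

(* Main.v *)
Require Import Defs.
From HB Require Import structures.
From mathcomp Require Import all_boot all_order all_algebra.
From mathcomp Require Import all_classical all_reals all_analysis.
From mathcomp Require Import lra ring.
From mathcomp Require Import measurable_realfun.
Import Order.TTheory GRing.Theory Num.Theory.
Local Open Scope ring_scope.
Local Open Scope classical_set_scope.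
Section H.
Context {R : realType}.

Lemma ln_le_sub1 (x : R) : 0 < x -> ln x <= x - 1.
Proof. move=> x0; have := expR_ge1Dx (ln x); rewrite lnK ?posrE //; lra. Qed.

Lemma wamgm (l a b : R) : 0 <= l <= 1 -> 0 < a -> 0 < b ->
  l * ln a + (1 - l) * ln b <= ln (l * a + (1 - l) * b).
Proof.
move=> /andP[l0 l1] a0 b0.
set m := l * a + (1 - l) * b.
have m0 : 0 < m.
  rewrite /m; nra.
have ha := @ln_le_sub1 _ (divr_gt0 a0 m0).
have hb := @ln_le_sub1 _ (divr_gt0 b0 m0).
rewrite ln_div ?posrE // in ha; rewrite ln_div ?posrE // in hb.
have e : l * (a / m - 1) + (1 - l) * (b / m - 1) = 0.
  rewrite /m; field; by rewrite -/m gt_eqF.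
have : l * (ln a - ln m) + (1 - l) * (ln b - ln m) <= 0.
  rewrite -e; apply: lerD; apply: ler_wpM2l => //; lra.
lra.
Qed.
End H.

Section H2.
Context {R : realType} (P : probability R R).
Local Open Scope ereal_scope.

Lemma meas_lne (u : R -> R) : measurable_fun setT u ->
  measurable_fun [set: R] (fun x : R => lne (u x)%:E).
Proof.
move=> mu.
have -> : (fun x => lne (u x)%:E) =
  (fun x => if (u x <= 0)%R then -oo else (ln (u x))%:E) by [].
apply: measurable_fun_ifT.
- by apply: measurable_fun_ler => //; exact: measurable_cst.
- exact: measurable_cst.
- apply/measurable_EFinP; exact: measurableT_comp.
Qed.

Lemma int_mono (F G : R -> \bar R) : measurable_fun setT F ->
  measurable_fun setT G -> (forall x, F x <= G x) ->
  \int[P]_x F x <= \int[P]_x G x.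
Proof.
move=> mF mG FG; rewrite integralE [leRHS]integralE leeB//.
- apply: ge0_le_integral => //.
  + exact: measurable_funepos.
  + exact: measurable_funepos.
  + by move=> x _; apply: (@funepos_le _ _ setT) => //; rewrite in_setT.
- apply: ge0_le_integral => //.
  + exact: measurable_funeneg.
  + exact: measurable_funeneg.
  + by move=> x _; apply: (@funeneg_le _ _ setT) => //; rewrite in_setT.
Qed.

Lemma lne_le_id (r : R) : (0 <= r)%R -> lne r%:E <= r%:E.
Proof.
move=> r0; have [->|rp] := eqVneq r 0%R; first by rewrite /= lexx leNye.
by apply/ltW/lne_sublinear.
Qed.

Lemma lne_pos_lt (u : R -> R) : measurable_fun setT u -> (forall x, (0 <= u x)%R) ->
  P.-integrable setT (EFin \o u) ->
  \int[P]_x (fun x => lne (u x)%:E)^\+ x < +oo.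
Proof.
move=> mu u0 iu.
apply: (@le_lt_trans _ _ (\int[P]_x (u x)%:E)).
  apply: ge0_le_integral => //.
  - by apply/measurable_funepos; exact: meas_lne.
  - by apply/measurable_EFinP.
  - move=> x _; rewrite funeposE ge_max; apply/andP; split.
      exact: lne_le_id.
    by rewrite lee_fin.
move/integrableP: iu => [_ iu]; apply: le_lt_trans iu.
apply: ge0_le_integral => //.
- by move=> x _; rewrite lee_fin.
- by apply/measurable_EFinP.
- by apply/measurableT_comp => //; apply/measurable_EFinP.
- by move=> x _ /=; rewrite lee_fin ger0_norm.
Qed.

Lemma I_lt (u : R -> R) : measurable_fun setT u -> (forall x, (0 <= u x)%R) ->
  P.-integrable setT (EFin \o u) ->
  \int[P]_x lne (u x)%:E < +oo.
Proof.
move=> mu u0 iu; rewrite integralE.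
have h := @lne_pos_lt u mu u0 iu.
have h2 : 0 <= \int[P]_x (fun x => lne (u x)%:E)^\- x.
  by apply: integral_ge0 => x _; exact: funeneg_ge0.
move: h h2; set A := \int[P]_x _; set B := \int[P]_x _.
by case: A => [a| |] //; case: B => [b| |] //= *; rewrite ?ltry.
Qed.

Lemma lne_integrable (u : R -> R) : measurable_fun setT u -> (forall x, (0 <= u x)%R) ->
  P.-integrable setT (EFin \o u) ->
  -oo < \int[P]_x lne (u x)%:E ->
  P.-integrable setT (fun x => lne (u x)%:E).
Proof.
move=> mu u0 iu hI.
have h := @lne_pos_lt u mu u0 iu.
have h0 : 0 <= \int[P]_x (fun x => lne (u x)%:E)^\+ x.
  by apply: integral_ge0 => x _; exact: funepos_ge0.
have h2 : 0 <= \int[P]_x (fun x => lne (u x)%:E)^\- x.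
  by apply: integral_ge0 => x _; exact: funeneg_ge0.
have hn : \int[P]_x (fun x => lne (u x)%:E)^\- x < +oo.
  move: hI; rewrite integralE.
  move: h h0 h2; set A := \int[P]_x _; set B := \int[P]_x _.
  by case: A => [a| |] //; case: B => [b| |] //= *; rewrite ltry.
apply/integrableP; split; first exact: meas_lne.
rewrite (_ : (fun x => `|lne (u x)%:E|) = (fun x => (fun x => lne (u x)%:E)^\+ x + (fun x => lne (u x)%:E)^\- x)); last first.
  by apply/funext => x; rewrite -[LHS]/((abse \o (fun x => lne (u x)%:E)) x) fune_abse.
rewrite ge0_integralD //.
- by apply: lte_add_pinfty.
- by apply/measurable_funepos; exact: meas_lne.
- by apply/measurable_funeneg; exact: meas_lne.
Qed.
End H2.

Section H3.
Context {R : realType} (P : probability R R).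
Local Open Scope ereal_scope.

Lemma pw1 (s v w : R) : (0 < s)%R -> (0 <= v)%R -> (s * v <= w)%R ->
  (ln s)%:E + lne v%:E <= lne w%:E.
Proof.
move=> s0 v0 svw.
have [->|vp] := eqVneq v 0%R; first by rewrite /= lexx addeNy leNye.
have vp' : (0 < v)%R by rewrite lt0r vp.
have wp : (0 < w)%R by apply: lt_le_trans svw; apply: mulr_gt0.
rewrite !lne_EFin // -EFinD lee_fin -lnM ?posrE ?mulr_gt0 //.
by rewrite ler_ln ?posrE ?mulr_gt0.
Qed.

Lemma pw2 (t A B u v S l : R) : (0 < t < 1)%R -> (0 < A)%R -> (0 < B)%R ->
  (0 <= u)%R -> (0 <= v)%R ->
  S = (t * A + (1 - t) * B)%R -> l = (t * A / S)%R ->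
  ((ln S - l * ln A - (1 - l) * ln B)%:E + (l%:E * lne u%:E + (1 - l)%:E * lne v%:E))
   <= lne (t * u + (1 - t) * v)%:E.
Proof.
move=> /andP[t0 t1] A0 B0 u0 v0 hS hl.
have S0 : (0 < S)%R by rewrite hS; nra.
have l0 : (0 < l)%R by rewrite hl; apply: divr_gt0 => //; nra.
have l1 : (l < 1)%R.
  by rewrite hl ltr_pdivrMr // mul1r hS; nra.
have l1' : (0 < 1 - l)%R by lra.
have [->|up] := eqVneq u 0%R.
  by rewrite /= lexx gt0_muleNy ?lte_fin // addNye addeNy leNye.
have [->|vp] := eqVneq v 0%R.
  by rewrite [lne 0%:E]/= lexx gt0_muleNy ?lte_fin // addeNy addeNy leNye.
have up' : (0 < u)%R by rewrite lt0r up.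
have vp' : (0 < v)%R by rewrite lt0r vp.
have wp : (0 < t * u + (1 - t) * v)%R by nra.
rewrite !lne_EFin // -!EFinM -!EFinD lee_fin.
have h := @wamgm R l (u / A) (v / B).
have hl01 : (0 <= l <= 1)%R by apply/andP; split; lra.
have := h hl01 (divr_gt0 up' A0) (divr_gt0 vp' B0).
have -> : (l * (u / A) + (1 - l) * (v / B) = (t * u + (1 - t) * v) / S)%R.
  have S0' := S0; rewrite hS in S0'.
  rewrite hl hS; field.
  by rewrite (gt_eqF S0') (gt_eqF A0) (gt_eqF B0).
rewrite !ln_div ?posrE //; lra.
Qed.

Lemma int_cstD (c : R) (F : R -> \bar R) : P.-integrable setT F ->
  \int[P]_x (c%:E + F x) = c%:E + \int[P]_x F x.
Proof.
move=> iF; rewrite integralD //.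
- rewrite integral_cst //; congr (_ + _); rewrite -[RHS]mule1; congr (_ * _); exact: probability_setT.
- exact: finite_measure_integrable_cst.
Qed.

Lemma int_lin (c l m : R) (F G : R -> \bar R) :
  P.-integrable setT F -> P.-integrable setT G ->
  \int[P]_x (c%:E + (l%:E * F x + m%:E * G x)) =
  c%:E + (l%:E * \int[P]_x F x + m%:E * \int[P]_x G x).
Proof.
move=> iF iG; rewrite int_cstD; last by apply: integrableD => //; apply: integrableZl.
rewrite integralD //; try by apply: integrableZl.
by rewrite !integralZl.
Qed.

Lemma int_lb (F G : R -> \bar R) : P.-integrable setT F ->
  measurable_fun setT G -> (forall x, F x <= G x) ->
  \int[P]_x F x <= \int[P]_x G x.
Proof.
move=> iF mG FG; apply: int_mono => //; exact: measurable_int iF.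
Qed.
End H3.

Local Close Scope classical_set_scope.
Theorem lemmaD8 (R : realType) (P : probability R R) (a b : R -> R) (r : R) :
  is_game P a -> is_game P b ->
  forall p q t : R, 0 <= p <= 1 -> 0 <= q <= 1 -> 0 <= t <= 1 ->
  (t%:E * gamef P a b r p + (1 - t)%:E * gamef P a b r q
     <= gamef P a b r (t * p + (1 - t) * q))%E.
Proof.
move=> [ma a0 ia _] [mb b0 ib _] p q t hp hq ht.
pose u (s : R) := fun x => s * a x + (1 - s) * b x.
have mu s : measurable_fun setT (u s).
  apply: measurable_funD; apply: measurable_funM => //; exact: measurable_cst.
have u0 s : 0 <= s <= 1 -> forall x, 0 <= u s x.
  move=> /andP[s0 s1] x; rewrite /u; apply: addr_ge0; apply: mulr_ge0 => //; lra.
have iu s : P.-integrable setT (EFin \o u s).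
  have -> : EFin \o u s = (fun x => s%:E * (a x)%:E + (1 - s)%:E * (b x)%:E)%E.
    by apply/funext => x; rewrite /= /u EFinD !EFinM.
  by apply: integrableD => //; apply: integrableZl.
pose I s := (\int[P]_x lne (u s x)%:E)%E.
have Ilt s : 0 <= s <= 1 -> (I s < +oo)%E.
  move=> hs; exact: (@I_lt R P (u s) (mu s) (u0 s hs) (iu s)).
have Iint s : 0 <= s <= 1 -> (-oo < I s)%E -> P.-integrable setT (fun x => lne (u s x)%:E).
  move=> hs; exact: (@lne_integrable R P (u s) (mu s) (u0 s hs) (iu s)).
set m := t * p + (1 - t) * q.
have hm : 0 <= m <= 1 by rewrite /m; apply/andP; split; nra.
have um x : u m x = t * u p x + (1 - t) * u q x by rewrite /u /m; ring.
suff K : (t%:E * expeR (I p) + (1 - t)%:E * expeR (I q) <= expeR (I m))%E.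
  change (t%:E * (expeR (I p) * ((expR r)^-1)%:E) + (1 - t)%:E * (expeR (I q) * ((expR r)^-1)%:E) <= expeR (I m) * ((expR r)^-1)%:E)%E.
  rewrite !muleA -muleDl //.
    by apply: lee_wpmul2r => //; rewrite lee_fin invr_ge0 expR_ge0.
  apply: ge0_adde_def; rewrite inE; apply: mule_ge0; rewrite ?lee_fin ?expeR_ge0 //; lra.
have split s : 0 <= s <= 1 -> I s = -oo%E \/ exists i, I s = i%:E.
  by move=> hs; move: (Ilt s hs); case: (I s) => [i| |] h //; [right; exists i|left].
have [t0|t0] := eqVneq t 0.
  have -> : m = q by rewrite /m t0; ring.
  by rewrite t0 mul0e add0e subr0 mul1e.
have [t1|t1] := eqVneq t 1.
  have -> : m = p by rewrite /m t1; ring.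
  by rewrite t1 mul1e subrr mul0e adde0.
have tp : 0 < t by rewrite lt0r t0; case/andP: ht.
have tl : t < 1 by rewrite lt_neqAle t1; case/andP: ht.
have imeas := @meas_lne R (u m) (mu m).
have icst c : P.-integrable setT (fun _ => c%:E).
  exact: (@finite_measure_integrable_cst _ _ _ P setT c).
have [Ipn|[i1 Ip]] := split p hp; have [Iqn|[i2 Iq]] := split q hq.
- by rewrite Ipn Iqn /= !mule0 adde0 expeR_ge0.
- rewrite Ipn /= mule0 add0e.
  have iq := Iint q hq ltac:(by rewrite Iq ltNyr).
  have L : ((ln (1 - t))%:E + I q <= I m)%E.
    rewrite /I -int_cstD //; apply: int_lb => //.
      by apply: integrableD => //.
    move=> x; apply: pw1; first lra.
      exact: u0.
    rewrite um; have := u0 p hp x; nra.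
  rewrite Iq in L; rewrite Iq.
  apply: le_trans (_ : _ <= expeR ((ln (1 - t))%:E + i2%:E))%E _; last by rewrite lee_expeR.
  by rewrite -EFinD /= -EFinM lee_fin expRD lnK ?posrE ?subr_gt0.
- rewrite Iqn /= mule0 adde0.
  have ip := Iint p hp ltac:(by rewrite Ip ltNyr).
  have L : ((ln t)%:E + I p <= I m)%E.
    rewrite /I -int_cstD //; apply: int_lb => //.
      by apply: integrableD => //.
    move=> x; apply: pw1 => //.
      exact: u0.
    rewrite um; have := u0 q hq x; nra.
  rewrite Ip in L; rewrite Ip.
  apply: le_trans (_ : _ <= expeR ((ln t)%:E + i1%:E))%E _; last by rewrite lee_expeR.
  by rewrite -EFinD /= -EFinM lee_fin expRD lnK ?posrE.
- have ip := Iint p hp ltac:(by rewrite Ip ltNyr).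
  have iq := Iint q hq ltac:(by rewrite Iq ltNyr).
  set A := expR i1; set B := expR i2.
  set S := t * A + (1 - t) * B; set l := t * A / S.
  have L : ((ln S - l * ln A - (1 - l) * ln B)%:E + (l%:E * I p + (1 - l)%:E * I q) <= I m)%E.
    rewrite /I -int_lin //; apply: int_lb => //.
      by apply: integrableD => //; apply: integrableD => //; apply: integrableZl.
    move=> x; rewrite um; apply: pw2 => //.
    - by apply/andP.
    - exact: expR_gt0.
    - exact: expR_gt0.
    - exact: u0.
    - exact: u0.
  rewrite Ip Iq /A /B !expRK -!EFinM -!EFinD in L.
  rewrite Ip Iq /= -!EFinM -EFinD.
  apply: le_trans (_ : _ <= expeR (ln S)%:E)%E _; last first.
    rewrite lee_expeR; apply: le_trans L; rewrite lee_fin le_eqVlt; apply/orP; left; apply/eqP; ring.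
  rewrite /= lnK // posrE /S /A /B.
  have := expR_gt0 i1; have := expR_gt0 i2; nra.
Qed.
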